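(* Let $\mathcal{L}$ be a countable language, let $\phi$ be an $\mathcal{L}_{\omega_1,\omega}$-sentence and let $\alpha<\omega_1$. Assume that for every $\gamma<\alpha$ the set $\Psi_\gamma(\phi)$ is countable (so that $X_\alpha(\phi)$ is a standard Borel space). Then (1) the function $Mod(\phi)\times\omega^{<\omega}\to X_\alpha(\phi)$ given by $(\mathcal{M},\vec a)\mapsto \phi^{\vec a,\mathcal{M}}_\alpha$ is Borel, and (2) $\Psi_\alpha(\phi)$ and $\Phi_\alpha(\phi)$ are $\mathbf{\Sigma}^1_1$ subsets of $X_\alpha(\phi)$.
   Context: $\mathcal{L}_{\omega_1,\omega}$ is the infinitary logic over $\mathcal{L}$ with countable conjunctions/disjunctions and finite quantifier strings. $Mod(\mathcal{L})$ is the set of $\mathcal{L}$-structures with universe $\mathbb{N}$, with the topology whose basic open sets are $\{M\in Mod(\mathcal{L}) \mid M\models\varphi(n_1,\dots,n_m)\}$ for quantifier-free $\varphi$ and $n_1,\dots,n_m\in\mathbb{N}$; it is Polish. For a sentence $\sigma$, $Mod(\sigma)$ is the set of members of $Mod(\mathcal{L})$ satisfying $\sigma$, a standard Borel space with the inherited Borel structure. Elements of $\omega^{<\omega}$ are finite tuples $\vec a$ of elements of $\mathbb{N}$. $\alpha$-types: for a countable structure $\mathcal{M}$ and a finite tuple $\vec a$ from $\mathcal{M}$ (with $\vec x$ a tuple of variables of the same length), define formulas by recursion: $\phi^{\vec a,\mathcal{M}}_0(\vec x)=\bigwedge\{\psi(\vec x)\mid \psi$ atomic or negated atomic, $\mathcal{M}\models\psi(\vec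 a)\}$; $\phi^{\vec a,\mathcal{M}}_{\alpha+1}=\phi^{\vec a,\mathcal{M}}_\alpha\wedge\bigwedge\{\exists\vec y\,\phi^{\vec a\frown\vec b,\mathcal{M}}_\alpha(\vec x,\vec y)\mid \vec b$ a finite tuple from $\mathcal{M}\}\wedge\bigwedge_n\forall y_0\dots y_n\bigvee\{\phi^{\vec a\frown\vec b,\mathcal{M}}_\alpha(\vec x,y_0,\dots,y_n)\mid\vec b\in\mathcal{M}^{n+1}\}$; $\phi^{\vec a,\mathcal{M}}_\lambda=\bigwedge_{\alpha<\lambda}\phi^{\vec a,\mathcal{M}}_\alpha$ for limit $\lambda$. Formulas are compared syntactically. $\Psi_\alpha(\phi)=\{\phi^{\vec a,\mathcal{M}}_\alpha\mid \mathcal{M}$ countable, $\mathcal{M}\models\phi$, $\vec a$ a tuple from $\mathcal{M}\}$ and $\Phi_\alpha(\phi)=\{\phi^{\emptyset,\mathcal{M}}_\alpha\mid \mathcal{M}$ countable, $\mathcal{M}\models\phi\}$. The space $X_\alpha(\phi)$: for $\alpha=0$, $X_0(\phi)=2^A$ where $A$ is the (countable) set of atomic and negated atomic formulas, and $\phi^{\vec a,\mathcal{M}}_0$ is identified with $\{\psi\in A\mid\mathcal{M}\models\psi(\vec a)\}$; for $\alpha=\gamma+1$, $X_\alpha(\phi)=2^{\Psi_\gamma(\phi)}$ and $\phi^{\vec a,\mathcal{M}}_{\gamma+1}$ is identified with $\{\phi^{\vec a\frown\vec b,\mathcal{M}}_\gamma\mid\vec b$ a finite tuple from $\mathcal{M}\}$;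 for $\alpha$ limit, $X_\alpha(\phi)=2^{\bigcup_{\gamma<\alpha}\Psi_\gamma(\phi)}$ and $\phi^{\vec a,\mathcal{M}}_\alpha$ is identified with $\{\phi^{\vec a,\mathcal{M}}_\gamma\mid\gamma<\alpha\}$. Via these identifications $\Psi_\alpha(\phi),\Phi_\alpha(\phi)\subseteq X_\alpha(\phi)$; when the index set is countable, $X_\alpha(\phi)$ carries the product (Cantor) topology and is a standard Borel space. *)

(* Defs.v *)
From Stdlib Require List.
From mathcomp Require Import all_boot.

Set Implicit Arguments.
Unset Strict Implicit.
Unset Printing Implicit Defensive.

Section Generic.
Variable T : Type.

Inductive sigma_gen (D : T -> Prop) (G : (T -> Prop) -> Prop) :
    (T -> Prop) -> Prop :=
| sg_base A : G A -> sigma_gen D G (fun x => A x /\ D x)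
| sg_empty : sigma_gen D G (fun _ => False)
| sg_compl A : sigma_gen D G A -> sigma_gen D G (fun x => D x /\ ~ A x)
| sg_union (F : nat -> T -> Prop) :
    (forall n, sigma_gen D G (F n)) -> sigma_gen D G (fun x => exists n, F n x).

Definition open_in (D : T -> Prop) (B : (T -> Prop) -> Prop) (U : T -> Prop) :=
  (forall x, U x -> D x) /\
  (forall x, U x -> exists b, B b /\ b x /\ forall y, b y -> D y -> U y).

Definition borel (D : T -> Prop) (B : (T -> Prop) -> Prop) : (T -> Prop) -> Prop :=
  sigma_gen D (open_in D B).

Definition countable_set (S : T -> Prop) :=
  exists f : T -> nat, forall x y, S x -> S y -> f x = f y -> x = y.
End Generic.

Definition baire_basis : ((nat -> nat) -> Prop) -> Prop :=
  fun S => exists s : seq nat,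
    S = fun y => forall i, i < size s -> y i = nth 0 s i.

Definition baire_prod_basis T (B : (T -> Prop) -> Prop) :
    ((T * (nat -> nat)) -> Prop) -> Prop :=
  fun S => exists b c, B b /\ baire_basis c /\ S = fun z => b z.1 /\ c z.2.

Definition sigma11 T (D : T -> Prop) (B : (T -> Prop) -> Prop) (A : T -> Prop) :=
  exists P, borel (fun z : T * (nat -> nat) => D z.1) (baire_prod_basis B) P /\
            forall x, A x <-> exists y, P (x, y).

Record lang := Lang {
  fsym : countType;  (* function (and constant = 0-ary) symbols *)
  rsym : countType;
  farity : fsym -> nat;
  rarity : rsym -> nat }.

Section Logic.
Variable L : lang.

Record structure (T : Type) := Struc {
  fint : forall f : fsym L, ('I_(farity f) -> T) -> T;
  rint : forall r : rsym L, ('I_(rarity r) -> T) -> Prop }.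

Inductive term :=
| Var of nat
| App (f : fsym L) of ('I_(farity f) -> term).

Inductive atom :=
| AEq of term & term
| ARel (r : rsym L) of ('I_(rarity r) -> term).

Inductive lit :=
| LPos of atom
| LNeg of atom.

(* finitary quantifier-free formulas (for the topology of Mod(L)) *)
Inductive qf :=
| QAtom of atom
| QNeg of qf
| QAnd of qf & qf
| QOr of qf & qf.

Inductive form :=
| FAtom of atom
| FNeg of form
| FConj of (nat -> form)
| FDisj of (nat -> form)
| FEx of nat & form
| FAll of nat & form.

Fixpoint tvars_lt (n : nat) (t : term) : Prop :=
  match t with
  | Var k => k < n
  | App f ts => forall i, tvars_lt n (ts i)
  end.

Fixpoint tmentions (k : nat) (t : term) : Prop :=
  match t with
  | Var j => j = k
  | App f ts => exists i, tmentions k (ts i)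
  end.

Definition avars_lt n (a : atom) : Prop :=
  match a with
  | AEq t1 t2 => tvars_lt n t1 /\ tvars_lt n t2
  | ARel r ts => forall i, tvars_lt n (ts i)
  end.

Definition amentions k (a : atom) : Prop :=
  match a with
  | AEq t1 t2 => tmentions k t1 \/ tmentions k t2
  | ARel r ts => exists i, tmentions k (ts i)
  end.

Definition lvars_lt n (l : lit) : Prop :=
  match l with LPos a | LNeg a => avars_lt n a end.

Fixpoint free (k : nat) (phi : form) : Prop :=
  match phi with
  | FAtom a => amentions k a
  | FNeg psi => free k psi
  | FConj fs | FDisj fs => exists i, free k (fs i)
  | FEx n psi | FAll n psi => k <> n /\ free k psi
  end.

Definition sentence (phi : form) := forall k, ~ free k phi.

Section Sat.
Variables (T : Type) (M : structure T).

Fixpoint teval (e : nat -> T) (t : term) : T :=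
  match t with
  | Var n => e n
  | App f ts => fint M (fun i => teval e (ts i))
  end.

Definition asat (e : nat -> T) (a : atom) : Prop :=
  match a with
  | AEq t1 t2 => teval e t1 = teval e t2
  | ARel r ts => rint M (fun i => teval e (ts i))
  end.

Definition lsat e (l : lit) : Prop :=
  match l with LPos a => asat e a | LNeg a => ~ asat e a end.

Fixpoint qsat e (q : qf) : Prop :=
  match q with
  | QAtom a => asat e a
  | QNeg q => ~ qsat e q
  | QAnd q1 q2 => qsat e q1 /\ qsat e q2
  | QOr q1 q2 => qsat e q1 \/ qsat e q2
  end.

Definition upd (e : nat -> T) (n : nat) (x : T) : nat -> T :=
  fun k => if k == n then x else e k.

Fixpoint sat (e : nat -> T) (phi : form) : Prop :=
  match phi with
  | FAtom a => asat e a
  | FNeg psi => ~ sat e psi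
  | FConj fs => forall i, sat e (fs i)
  | FDisj fs => exists i, sat e (fs i)
  | FEx n psi => exists x, sat (upd e n x) psi
  | FAll n psi => forall x, sat (upd e n x) psi
  end.

Definition models (phi : form) := forall e, sat e phi.
End Sat.

(* Mod(L) = structure nat.  Basic open sets {M | M |= q(n_1..n_m)}.   *)
Definition modL_basis : (structure nat -> Prop) -> Prop :=
  fun S => exists (q : qf) (ns : seq nat),
    S = fun M => qsat M (fun i => nth 0 ns i) q.

(* basis of Mod(L) x omega^{<omega} (the latter discrete) *)
Definition mod_seq_basis : ((structure nat * seq nat) -> Prop) -> Prop :=
  fun S => exists b s, modL_basis b /\ S = fun z => b z.1 /\ z.2 = s.

(* a countable (nonempty) L-structure together with a finite tuple    *)
Record pstr := PStr { car : countType; pt : car; st : structure car;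
                      tup : seq car }.

Definition ext (p : pstr) (b : seq (car p)) : pstr :=
  @PStr (car p) (pt p) (st p) (tup p ++ b).

(* phi_0^{a,M}, identified with the set of (negated) atomic formulas in
   the variables x_0..x_{|a|-1} true of a in M *)
Definition diag0 (p : pstr) : lit -> Prop :=
  fun l => lvars_lt (size (tup p)) l /\ lsat (st p) (fun i => nth (pt p) (tup p) i) l.

(* Countable ordinals are coded by a well-order lt on nat; the ordinal
   coded by a : nat is the order type of {x | lt x a}. *)
Section Types.
Variables (lt : nat -> nat -> Prop) (wf : well_founded lt).

Definition succ_of (d g : nat) := lt d g /\ ~ exists e, lt d e /\ lt e g.
Definition is_zero (g : nat) := forall d, ~ lt d g.
Definition is_limit (g : nat) := (exists d, lt d g) /\ ~ exists d, succ_of d g.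

(* tp g p q  <->  phi_g^{p} and phi_g^{q} are syntactically equal.
   Thus the predicate (tp g p) (the class of p) represents the formula
   phi_g^{a,M} where p = (M,a). *)
Definition tp_F (g : nat) (rec : forall d, lt d g -> pstr -> pstr -> Prop)
    (p q : pstr) : Prop :=
  diag0 p = diag0 q /\
  forall d (h : lt d g),
    rec d h p = rec d h q /\
    (succ_of d g ->
       (fun X => exists b : seq (car p), X = rec d h (@ext p b)) =
       (fun X => exists c : seq (car q), X = rec d h (@ext q c))).

Definition tp : nat -> pstr -> pstr -> Prop :=
  Fix wf (fun _ => pstr -> pstr -> Prop) tp_F.

(* formulas of level g are represented as (g, class) *)
Definition K := (nat * (pstr -> Prop))%type.
(* ambient index type: atomic/negated atomic formulas, or higher formulas *)
Definition Idx := (lit + K)%type.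

(* phi_a^{p} under the paper's identification with an element of X_a *)
Definition typ (a : nat) (p : pstr) : Idx -> Prop := fun i =>
  (is_zero a /\ exists l, i = inl l /\ diag0 p l) \/
  (exists d, succ_of d a /\ exists b : seq (car p), i = inr (d, tp d (@ext p b))) \/
  (is_limit a /\ exists d, lt d a /\ i = inr (d, tp d p)).

Variable phi : form.

Definition pmodel (p : pstr) := models (st p) phi.

Definition Psi (g : nat) : K -> Prop :=
  fun k => exists p, pmodel p /\ k = (g, tp g p).

Definition Xidx (a : nat) : Idx -> Prop := fun i =>
  (is_zero a /\ exists l, i = inl l) \/
  (exists d, succ_of d a /\ exists k, i = inr k /\ Psi d k) \/
  (is_limit a /\ exists d k, lt d a /\ Psi d k /\ i = inr k).

(* X_a = 2^{Xidx a}, as subsets of Xidx a, with the product topology *)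
Definition Xdom (a : nat) : (Idx -> Prop) -> Prop :=
  fun S => forall i, S i -> Xidx a i.

Definition Xbasis (a : nat) : ((Idx -> Prop) -> Prop) -> Prop :=
  fun U => exists pos neg : seq Idx,
    (forall i, List.In i pos -> Xidx a i) /\ (forall i, List.In i neg -> Xidx a i) /\
    U = fun S => (forall i, List.In i pos -> S i) /\ (forall i, List.In i neg -> ~ S i).

Definition PsiX (a : nat) : (Idx -> Prop) -> Prop :=
  fun S => exists p, pmodel p /\ S = typ a p.
Definition PhiX (a : nat) : (Idx -> Prop) -> Prop :=
  fun S => exists p, pmodel p /\ tup p = [::] /\ S = typ a p.

Definition ModSeq : (structure nat * seq nat) -> Prop :=
  fun z => models z.1 phi.

Definition tpmap (a : nat) (z : structure nat * seq nat) : Idx -> Prop :=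
  typ a (@PStr nat 0 z.1 z.2).
End Types.
End Logic.

(* Main.v *)
Require Import Defs.
From mathcomp Require Import all_boot.
From Stdlib Require Import FunctionalExtensionality PropExtensionality Classical ClassicalEpsilon.
Set Implicit Arguments.
Unset Strict Implicit.
Unset Printing Implicit Defensive.


Lemma predext T (A B : T -> Prop) : (forall x, A x <-> B x) -> A = B.
Proof. move=> h; apply: functional_extensionality => x; apply: propositional_extensionality; exact: h. Qed.

Section Meas.
Variables (T : Type) (D : T -> Prop) (G : (T -> Prop) -> Prop).
Definition mB (X : T -> Prop) := sigma_gen D G (fun x => D x /\ X x).

Lemma sg_ext A B : sigma_gen D G A -> (forall x, A x <-> B x) -> sigma_gen D G B.
Proof. by move=> h e; rewrite -(predext e). Qed.

Lemma mB_ext X Y : (forall x, D x -> (X x <-> Y x)) -> mB X -> mB Y.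
Proof. move=> e h; apply: (sg_ext h) => x; split; move=> [dx p]; split => //; by apply/(e x dx). Qed.

Lemma mB_False : mB (fun _ => False).
Proof. apply: sg_ext (sg_empty D G) _ => x; tauto. Qed.

Lemma mB_not X : mB X -> mB (fun x => ~ X x).
Proof. move=> h; apply: sg_ext (sg_compl h) _ => x; tauto. Qed.

Lemma mB_True : mB (fun _ => True).
Proof. apply: mB_ext (mB_not mB_False) => x; tauto. Qed.

Lemma mB_exn (F : nat -> T -> Prop) : (forall n, mB (F n)) -> mB (fun x => exists n, F n x).
Proof.
move=> h; apply: sg_ext (sg_union h) _ => x; split.
  by move=> [n [dx p]]; split => //; exists n.
by move=> [dx [n p]]; exists n.
Qed.

Lemma mB_alln (F : nat -> T -> Prop) : (forall n, mB (F n)) -> mB (fun x => forall n, F n x).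
Proof.
move=> h; apply: mB_ext (mB_not (mB_exn (fun n => mB_not (h n)))) => x _.
split; first by move=> H n; apply: NNPP => H2; apply: H; exists n.
by move=> H [n]; apply.
Qed.

Lemma mB_const (P : Prop) : mB (fun _ => P).
Proof.
case: (classic P) => p.
  by apply: mB_ext mB_True => x _; tauto.
by apply: mB_ext mB_False => x _; tauto.
Qed.

Lemma mB_and X Y : mB X -> mB Y -> mB (fun x => X x /\ Y x).
Proof.
move=> hx hy; pose F n := if n is 0 then X else Y.
have: mB (fun x => forall n, F n x) by apply: mB_alln => -[|n].
apply: mB_ext => x _; split; first by move=> H; split; [exact: (H 0) | exact: (H 1)].
by move=> [a b] [|n].
Qed.

Lemma mB_or X Y : mB X -> mB Y -> mB (fun x => X x \/ Y x).
Proof.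
move=> hx hy; pose F n := if n is 0 then X else Y.
have: mB (fun x => exists n, F n x) by apply: mB_exn => -[|n].
apply: mB_ext => x _; split; first by move=> [[|n] H]; [left|right].
by move=> [a|b]; [exists 0 | exists 1].
Qed.

Lemma mB_impl (P : Prop) X : (P -> mB X) -> mB (fun x => P -> X x).
Proof.
case: (classic P) => p h.
  by apply: mB_ext (h p) => x _; tauto.
by apply: mB_ext mB_True => x _; tauto.
Qed.

Lemma mB_iff X Y : mB X -> mB Y -> mB (fun x => X x <-> Y x).
Proof.
move=> hx hy; apply: mB_ext (mB_or (mB_and hx hy) (mB_and (mB_not hx) (mB_not hy))) => x _.
split; first by move=> [[a b]|[a b]]; tauto.
by move=> H; case: (classic (X x)) => a; [left | right]; tauto.
Qed.

Lemma mB_ex (C : countType) (F : C -> T -> Prop) : (forall c, mB (F c)) -> mB (fun x => exists c, F c x).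
Proof.
move=> h.
have: mB (fun x => exists n, match @unpickle C n with Some c => F c x | None => False end).
  by apply: mB_exn => n; case: (unpickle n) => [c|]; [exact: h | exact: mB_False].
apply: mB_ext => x _; split.
  by move=> [n]; case: (unpickle n) => // c H; exists c.
by move=> [c H]; exists (pickle c); rewrite pickleK.
Qed.

Lemma mB_all (C : countType) (F : C -> T -> Prop) : (forall c, mB (F c)) -> mB (fun x => forall c, F c x).
Proof.
move=> h.
have: mB (fun x => forall n, match @unpickle C n with Some c => F c x | None => True end).
  by apply: mB_alln => n; case: (unpickle n) => [c|]; [exact: h | exact: mB_True].
apply: mB_ext => x _; split.
  by move=> H c; move: (H (pickle c)); rewrite pickleK.
by move=> H n; case: (unpickle n).
Qed.



Lemma mB_base A : G A -> mB A.
Proof.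
move=> h; apply: sg_ext (sg_base D h) _ => x; tauto.
Qed.
End Meas.

Lemma preimage T V (DT : T -> Prop) GT (DV : V -> Prop) GV (f : T -> V) :
  (forall x, DT x -> DV (f x)) ->
  (forall U, open_in DV GV U -> mB DT GT (fun x => U (f x))) ->
  forall B, borel DV GV B -> mB DT GT (fun x => B (f x)).
Proof.
move=> hd ho B; elim => {B}.
- move=> A hA; apply: mB_ext (ho _ hA) => x dx; have := hd x dx; tauto.
- exact: mB_False.
- move=> A _ IH; apply: mB_ext (mB_not IH) => x dx; have := hd x dx; tauto.
- move=> F _ IH; exact: mB_exn.
Qed.


Section TP.
Variables (L : lang) (lt : nat -> nat -> Prop) (wf : well_founded lt).
Local Notation TP := (@tp L lt wf).

Lemma tp_eq g (p q : pstr L) : TP g p q <->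
  (diag0 p = diag0 q /\ forall d, lt d g -> TP d p = TP d q /\
     (succ_of lt d g -> (fun X => exists b : seq (car p), X = TP d (@ext _ p b)) =
                        (fun X => exists c : seq (car q), X = TP d (@ext _ q c)))).
Proof.
rewrite /tp Fix_eq; first by rewrite /tp_F; split => -[a b]; split => // d h; apply: b.
move=> x f g0 e.
have -> : f = g0 by apply: functional_extensionality_dep => y; apply: functional_extensionality_dep => h; apply: e.
by [].
Qed.

Lemma tp_refl g p : TP g p p.
Proof. by apply/tp_eq. Qed.
Lemma tp_sym g p q : TP g p q -> TP g q p.
Proof. move/tp_eq => [a b]; apply/tp_eq; split => // d h; have [c e] := b d h; split => // s; by rewrite e. Qed.
Lemma tp_trans g p q r : TP g p q -> TP g q r -> TP g p r.
Proof.
move/tp_eq => [a b] /tp_eq [a' b']; apply/tp_eq; split; first by rewrite a.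
move=> d h; have [c e] := b d h; have [c' e'] := b' d h; split; first by rewrite c.
by move=> s; rewrite e // e'.
Qed.

Lemma tp_eqP g p q : TP g p = TP g q <-> TP g p q.
Proof.
split; first by move=> ->; apply: tp_refl.
move=> h; apply: predext => x; split => H.
  by apply: tp_trans (tp_sym h) H.
by apply: tp_trans h H.
Qed.

Lemma seteqP (A B : Type) (f : A -> pstr L -> Prop) (g : B -> pstr L -> Prop) :
  (fun X => exists a, X = f a) = (fun X => exists b, X = g b) <->
  ((forall a, exists b, f a = g b) /\ (forall b, exists a, f a = g b)).
Proof.
split.
  move=> e; split.
    move=> a; have := equal_f e (f a) => /= H.
    have : exists b, f a = g b by rewrite -H; exists a.
    by move=> [b ->]; exists b.
  move=> b; have := equal_f e (g b) => /= H.
  have : exists a, g b = f a by rewrite H; exists b.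
  by move=> [a ->]; exists a.
move=> [h1 h2]; apply: predext => X; split.
  by move=> [a ->]; have [b e] := h1 a; exists b.
by move=> [b ->]; have [a e] := h2 b; exists a.
Qed.

Lemma tp_unfold g p q : TP g p q <->
  ((forall l, diag0 p l <-> diag0 q l) /\ forall d, lt d g -> TP d p q /\
     (succ_of lt d g -> (forall b, exists c, TP d (@ext _ p b) (@ext _ q c)) /\
                        (forall c, exists b, TP d (@ext _ p b) (@ext _ q c)))).
Proof.
rewrite tp_eq; split.
  move=> [a b]; split; first by rewrite a.
  move=> d h; have [c e] := b d h; split; first by apply/tp_eqP.
  move=> s; move/seteqP: (e s) => [e1 e2]; split.
    by move=> b0; have [c0 ?] := e1 b0; exists c0; apply/tp_eqP.
  by move=> c0; have [b0 ?] := e2 c0; exists b0; apply/tp_eqP.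
move=> [a b]; split; first by apply: predext.
move=> d h; have [c e] := b d h; split; first by apply/tp_eqP.
move=> s; have [e1 e2] := e s; apply/seteqP; split.
  by move=> b0; have [c0 ?] := e1 b0; exists c0; apply/tp_eqP.
by move=> c0; have [b0 ?] := e2 c0; exists b0; apply/tp_eqP.
Qed.
End TP.


Section KEY.
Variables (L : lang) (lt : nat -> nat -> Prop) (wf : well_founded lt).
Local Notation TP := (@tp L lt wf).
Variables (litenum : nat -> lit L) (litenumS : forall l, exists n, litenum n = l).
Variables (W : Type) (D : W -> Prop) (G : (W -> Prop) -> Prop).
Variables (C : countType) (c0 : C) (Mw : W -> structure L C) (sw : W -> seq C).
Definition Pw w b : pstr L := @PStr L C c0 (Mw w) (sw w ++ b).
Hypothesis HD : forall b l, mB D G (fun w => diag0 (Pw w b) l).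

Lemma KEY d : forall (q : pstr L) b, mB D G (fun w => TP d (Pw w b) q).
Proof.
elim/(well_founded_induction wf): d => d IH q b.
have H1 : mB D G (fun w => forall n, diag0 (Pw w b) (litenum n) <-> diag0 q (litenum n)).
  by apply: mB_alln => n; apply: mB_iff; [exact: HD | exact: mB_const].
have H2 : mB D G (fun w => forall e, lt e d -> TP e (Pw w b) q /\
     (succ_of lt e d -> (forall b', exists c, TP e (Pw w (b ++ b')) (@ext _ q c)) /\
                        (forall c, exists b', TP e (Pw w (b ++ b')) (@ext _ q c)))).
  apply: mB_alln => e; apply: mB_impl => he; apply: mB_and; first exact: IH.
  apply: mB_impl => _; apply: mB_and.
    by apply: mB_all => b'; apply: mB_ex => c; apply: IH.
  by apply: mB_all => c; apply: mB_ex => b'; apply: IH.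
apply: mB_ext (mB_and H1 H2) => w _; rewrite tp_unfold.
have E : forall b', @ext _ (Pw w b) b' = Pw w (b ++ b') by move=> b'; rewrite /Pw /ext /= catA.
split.
  move=> [a c]; split; first by move=> l; have [n <-] := litenumS l.
  move=> e h; have [c1 c2] := c e h; split => // s; have [x1 x2] := c2 s; split.
    by move=> b'; have [c' H] := x1 b'; exists c'; rewrite E.
  by move=> c'; have [b' H] := x2 c'; exists b'; rewrite E.
move=> [a c]; split; first by move=> n; apply a.
move=> e h; have [c1 c2] := c e h; split => // s; have [x1 x2] := c2 s; split.
  by move=> b'; have [c' H] := x1 b'; exists c'; rewrite -E.
by move=> c'; have [b' H] := x2 c'; exists b'; rewrite -E.
Qed.

Variable a : nat.
Lemma MEM i : mB D G (fun w => typ wf a (@PStr L C c0 (Mw w) (sw w)) i).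
Proof.
have E : forall w, @PStr L C c0 (Mw w) (sw w) = Pw w [::] by move=> w; rewrite /Pw cats0.
case: i => [l | [d K]].
  have := mB_and (mB_const D G (is_zero lt a)) (HD [::] l).
  apply: mB_ext => w _; rewrite /typ E; split.
    by move=> [z h]; left; split => //; exists l.
  by move=> [[z [l' [[<-] h]]]|[[d' [_ [b //]]]|[_ [d' [_ //]]]]].
have HK : forall b, mB D G (fun w => K = TP d (Pw w b)).
  move=> b; case: (classic (exists q, K = TP d q)) => [[q eK]|nq].
    rewrite eK.
    by apply: mB_ext (KEY d q b) => w _; split => h; [apply/tp_eqP; apply: tp_sym | apply: tp_sym; apply/tp_eqP].
  by apply: mB_ext (mB_False D G) => w _; split => // h; apply: nq; exists (Pw w b).
have := mB_or (mB_and (mB_const D G (succ_of lt d a)) (mB_ex HK))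
              (mB_and (mB_const D G (is_limit lt a /\ lt d a)) (HK [::])).
apply: mB_ext => w _; rewrite /typ; split.
  move=> [[s [b e]]|[[lm ld] e]]; right; [left|right].
    by exists d; split => //; exists b; rewrite e.
  by split => //; exists d; split => //; rewrite e -E.
move=> [[_ [l [//]]]|[[d' [s [b [e1 e2]]]]|[lm [d' [ld [e1 e2]]]]]]; subst.
  by left; split => //; exists b.
by right; split => //; rewrite E.
Qed.
End KEY.


Section Enc.
Variable L : lang.
Fixpoint tenc (t : term L) : GenTree.tree nat :=
  match t with
  | Var n => GenTree.Leaf n
  | App f ts => GenTree.Node (pickle f) [seq tenc (ts i) | i <- enum 'I_(farity f)]
  end.

Lemma map_enum_inj n T (f g : 'I_n -> T) : [seq f i | i <- enum 'I_n] = [seq g i | i <- enum 'I_n] -> f = g.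
Proof.
move=> /eq_in_map e; apply: functional_extensionality => i; apply: e; by rewrite mem_enum.
Qed.

Lemma tenc_inj : injective tenc.
Proof.
elim => [n|f ts IH] [m|g us] //=; first by case=> ->.
case=> ef.
have eg : f = g by apply: (pcan_inj pickleK).
subst g => e.
have : (fun i => tenc (ts i)) = (fun i => tenc (us i)) by apply: map_enum_inj.
move=> e2; congr App; apply: functional_extensionality => i.
apply: IH; exact: (equal_f e2 i).
Qed.

Definition aenc (a : atom L) : GenTree.tree nat :=
  match a with
  | AEq t1 t2 => GenTree.Node 0 [:: tenc t1; tenc t2]
  | ARel r ts => GenTree.Node 1 (GenTree.Leaf (pickle r) :: [seq tenc (ts i) | i <- enum 'I_(rarity r)])
  end.

Lemma aenc_inj : injective aenc.
Proof.
case=> [t1 t2|r ts] [u1 u2|r' us] //=.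
  by case=> /tenc_inj -> /tenc_inj ->.
case=> ef; have er : r = r' by apply: (pcan_inj pickleK).
subst r' => e; congr ARel; apply: functional_extensionality => i.
apply: tenc_inj; have := map_enum_inj e; move=> e2; exact: (equal_f e2 i).
Qed.

Definition lenc (l : lit L) : nat :=
  match l with
  | LPos a => pickle (GenTree.Node 0 [:: aenc a])
  | LNeg a => pickle (GenTree.Node 1 [:: aenc a])
  end.

Lemma lenc_inj : injective lenc.
Proof.
case=> a [b|b] /= /(pcan_inj pickleK) //; by case=> /aenc_inj ->.
Qed.

Definition litdef : lit L := LPos (AEq (Var L 0) (Var L 0)).
Definition litenum (n : nat) : lit L :=
  match excluded_middle_informative (exists l, lenc l = n) with
  | left h => proj1_sig (constructive_indefinite_description _ h)
  | right _ => litdef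
  end.

Lemma litenumS l : exists n, litenum n = l.
Proof.
exists (lenc l); rewrite /litenum; case: excluded_middle_informative => [h|[]]; last by exists l.
by case: constructive_indefinite_description => x /= /lenc_inj.
Qed.
End Enc.


Lemma basis_mB T (D : T -> Prop) B b : B b -> mB D (open_in D B) b.
Proof.
move=> hb; have : open_in D B (fun x => b x /\ D x).
  by split; [move=> x [] | move=> x [bx dx]; exists b; split => //; split => // y].
move/(mB_base D); apply: mB_ext => x dx. tauto.
Qed.

Section X.
Variables (L : lang) (lt : nat -> nat -> Prop) (wf : well_founded lt).
Local Notation TP := (@tp L lt wf).
Variables (phi : form L) (a : nat).
Hypothesis hcount : forall g, lt g a -> countable_set (Psi wf phi g).

Lemma typ_Xdom p : pmodel phi p -> Xdom wf phi a (typ wf a p).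
Proof.
move=> hp i [[z [l [-> _]]]|[[d [s [b ->]]]|[lm [d [ld ->]]]]].
- by left; split => //; exists l.
- right; left; exists d; split => //; exists (d, TP d (@ext _ p b)); split => //.
  by exists (@ext _ p b).
- by right; right; split => //; exists d, (d, TP d p); split => //; split => //; exists p.
Qed.

Definition J := (bool * (nat * nat))%type.
Definition cntf d : K L -> nat :=
  match excluded_middle_informative (lt d a) with
  | left H => proj1_sig (constructive_indefinite_description _ (hcount H))
  | right _ => fun _ => 0
  end.
Lemma cntf_inj d k k' : lt d a -> Psi wf phi d k -> Psi wf phi d k' -> cntf d k = cntf d k' -> k = k'.
Proof.
rewrite /cntf; case: excluded_middle_informative => // H _.
case: constructive_indefinite_description => f /= hf; exact: hf.
Qed.
Definition gen d m : option (K L) :=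
  match excluded_middle_informative (exists k, Psi wf phi d k /\ cntf d k = m) with
  | left h => Some (proj1_sig (constructive_indefinite_description _ h))
  | right _ => None
  end.
Lemma gen_sound d m k : gen d m = Some k -> Psi wf phi d k /\ cntf d k = m.
Proof.
rewrite /gen; case: excluded_middle_informative => // h.
by case: constructive_indefinite_description => x /= hx [<-].
Qed.
Lemma gen_surj d k : lt d a -> Psi wf phi d k -> gen d (cntf d k) = Some k.
Proof.
move=> hd hk; rewrite /gen; case: excluded_middle_informative => [h|[]]; last by exists k.
case: constructive_indefinite_description => x /= [hx e]; congr Some; exact: cntf_inj e.
Qed.

Definition en (j : J) : option (Idx L) :=
  let: (bb, (d, m)) := j in
  if bb then
    (match excluded_middle_informative (is_zero lt a) with
     | left _ => Some (inl (litenum L m)) | right _ => None end)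
  else
    (match excluded_middle_informative (lt d a /\ (succ_of lt d a \/ is_limit lt a)) with
     | left _ => omap inr (gen d m) | right _ => None end).

Lemma en_sound j i : en j = Some i -> Xidx wf phi a i.
Proof.
case: j => [[] [d m]] /=; case: excluded_middle_informative => // h.
  by case=> <-; left; split => //; eexists.
case E: (gen d m) => [k|] //= [<-]; have [hk _] := gen_sound E.
case: h => hd [hs|hl].
  by right; left; exists d; split => //; exists k.
by right; right; split => //; exists d, k.
Qed.

Lemma en_surj i : Xidx wf phi a i -> exists j, en j = Some i.
Proof.
move=> [[z [l ->]]|[[d [s [k [-> hk]]]]|[lm [d [k [ld [hk ->]]]]]]].
- have [n e] := litenumS l; exists (true, (0, n)) => /=.
  by case: excluded_middle_informative => // _; rewrite e.
- exists (false, (d, cntf d k)) => /=; case: excluded_middle_informative => [_|[]].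
    by rewrite gen_surj //; case: s.
  by split; [case: s | left].
- exists (false, (d, cntf d k)) => /=; case: excluded_middle_informative => [_|[]].
    by rewrite gen_surj.
  by split => //; right.
Qed.

Definition oP (P : Idx L -> Prop) (o : option (Idx L)) := if o is Some i then P i else True.

Lemma list_to_J pos : (forall i, List.In i pos -> Xidx wf phi a i) ->
  exists ns : seq J, forall P, (forall j, j \in ns -> oP P (en j)) <-> (forall i, List.In i pos -> P i).
Proof.
elim: pos => [|i pos IH] h.
  by exists [::] => P; split => // _ j.
have [ns hns] := IH (fun x hx => h x (or_intror hx)).
have [j ej] := en_surj (h i (or_introl erefl)).
exists (j :: ns) => P; split.
  move=> H x /= [<-|hx].
    by have := H j; rewrite inE eqxx ej; apply.
  by apply: (proj1 (hns P)) hx => j' hj'; apply: H; rewrite inE hj' orbT.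
move=> H j'; rewrite inE => /orP [/eqP ->|hj'].
  by rewrite ej; apply: H; left.
by apply: (proj2 (hns P)) j' hj' => x hx; apply: H; right.
Qed.

Lemma open_pre (W : Type) (DW : W -> Prop) GW (f : W -> Idx L -> Prop) :
  (forall w, DW w -> Xdom wf phi a (f w)) ->
  (forall i, mB DW GW (fun w => f w i)) ->
  forall U, open_in (Xdom wf phi a) (Xbasis wf phi a) U -> mB DW GW (fun w => U (f w)).
Proof.
move=> hd hm U [hU1 hU2].
pose bJ (ns : seq J * seq J) (S : Idx L -> Prop) :=
  (forall j, j \in ns.1 -> oP S (en j)) /\ (forall j, j \in ns.2 -> oP (fun i => ~ S i) (en j)).
have : mB DW GW (fun w => exists ns, (forall S, Xdom wf phi a S -> bJ ns S -> U S) /\ bJ ns (f w)).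
  apply: mB_ex => ns; apply: mB_and; first exact: mB_const.
  apply: mB_and; apply: mB_all => j; apply: mB_impl => _; case: (en j) => [i|] /=;
    try exact: mB_True; [exact: hm | exact: mB_not].
apply: mB_ext => w dw; split.
  by move=> [ns [h1 h2]]; apply: h1 => //; exact: hd.
move=> hU; have [b [[pos [neg [hp [hn ->]]]] [hb hsub]]] := hU2 _ hU.
have [ns1 h1] := list_to_J hp; have [ns2 h2] := list_to_J hn.
exists (ns1, ns2); split.
  move=> S hS [b1 b2]; apply: hsub => //; split.
    by apply/(h1 S).
  by apply/(h2 (fun i => ~ S i)).
by split; [apply/(h1 (f w)) | apply/(h2 (fun i => ~ f w i))]; case: hb.
Qed.
End X.


Definition qlit L (l : lit L) : qf L :=
  match l with LPos a => QAtom a | LNeg a => QNeg (QAtom a) end.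
Lemma lsat_qlit L T (M : structure L T) e l : lsat M e l <-> qsat M e (qlit l).
Proof. by case: l. Qed.

Section P1.
Variables (L : lang) (lt : nat -> nat -> Prop) (wf : well_founded lt).
Variables (phi : form L) (a : nat).
Hypothesis hcount : forall g, lt g a -> countable_set (Psi wf phi g).
Local Notation D1 := (ModSeq phi).
Local Notation G1 := (open_in D1 (@mod_seq_basis L)).

Lemma HD1 b l : mB D1 G1 (fun z => diag0 (@Pw L _ nat 0 (fun z => z.1) (fun z => z.2) z b) l).
Proof.
have : mB D1 G1 (fun z => exists s : seq nat, lvars_lt (size (s ++ b)) l /\
          ((qsat z.1 (fun i => nth 0 (s ++ b) i) (qlit l)) /\ z.2 = s)).
  apply: mB_ex => s; apply: mB_and; first exact: mB_const.
  apply: basis_mB; exists (fun M => qsat M (fun i => nth 0 (s ++ b) i) (qlit l)), s.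
  by split => //; exists (qlit l), (s ++ b).
apply: mB_ext => z _; rewrite /diag0 /Pw /=; split.
  by move=> [s [h1 [h2 e]]]; subst s; split => //; apply/lsat_qlit.
by move=> [h1 h2]; exists z.2; split => //; split => //; apply/lsat_qlit.
Qed.

Lemma part1 :
  (forall z, ModSeq phi z -> Xdom wf phi a (tpmap wf a z)) /\
   (forall B, borel (Xdom wf phi a) (Xbasis wf phi a) B ->
      borel (ModSeq phi) (@mod_seq_basis L)
            (fun z => ModSeq phi z /\ B (tpmap wf a z))).
Proof.
have hd : forall z, ModSeq phi z -> Xdom wf phi a (tpmap wf a z).
  by move=> z hz; apply: typ_Xdom.
split => // B hB.
apply: (preimage hd _ hB) => U hU.
apply: (open_pre hcount hd _ hU) => i.
have := (MEM wf (@litenumS L) HD1 a i). exact.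
Qed.
End P1.


Section Coin.
Variables (L : lang) (T : Type) (M : structure L T).

Lemma teval_coin (t : term L) e e' : (forall k, tmentions k t -> e k = e' k) -> teval M e t = teval M e' t.
Proof.
elim: t => [n|f ts IH] /= h; first by apply: h.
congr fint; apply: functional_extensionality => i; apply: IH => k hk; apply: h; by exists i.
Qed.

Lemma sat_coin (psi : form L) : forall e e', (forall k, free k psi -> e k = e' k) -> (sat M e psi <-> sat M e' psi).
Proof.
elim: psi => [[t1 t2|r ts]|psi IH|fs IH|fs IH|n psi IH|n psi IH] e e' h /=.
- by rewrite /asat (@teval_coin t1 e e') ?(@teval_coin t2 e e') // => k hk; apply: h; [right|left].
- rewrite /asat; have -> : (fun i => teval M e (ts i)) = (fun i => teval M e' (ts i)) => //.
  apply: functional_extensionality => i; apply: teval_coin => k hk; apply: h; by exists i.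
- by rewrite (IH e e').
- by split => H i; [rewrite -(IH i e e') | rewrite (IH i e e')] => // k hk; apply: h; exists i.
- by split => -[i H]; exists i; [rewrite -(IH i e e') | rewrite (IH i e e')] => // k hk; apply: h; exists i.
- have hx : forall x, sat M (upd e n x) psi <-> sat M (upd e' n x) psi.
    move=> x; apply: IH => k hk; rewrite /upd; case: eqP => // /eqP hkn.
    by apply: h; split => //; apply/eqP.
  by split => -[x H]; exists x; apply/hx.
- have hx : forall x, sat M (upd e n x) psi <-> sat M (upd e' n x) psi.
    move=> x; apply: IH => k hk; rewrite /upd; case: eqP => // /eqP hkn.
    by apply: h; split => //; apply/eqP.
  by split => H x; apply/hx.
Qed.

Lemma models_sent (phi : form L) (e0 : nat -> T) : sentence phi -> (models M phi <-> sat M e0 phi).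
Proof.
move=> hs; split; first by apply.
move=> H e; apply/(sat_coin (e' := e0)) => // k hk; by case: (hs k).
Qed.
End Coin.

Section Iso.
Variables (L : lang) (lt : nat -> nat -> Prop) (wf : well_founded lt).
Local Notation TP := (@tp L lt wf).
Variables (C1 C2 : countType) (h : C1 -> C2) (k : C2 -> C1).
Hypotheses (hk : cancel h k) (kh : cancel k h).

Definition trans (M : structure L C1) : structure L C2 :=
  @Struc L C2 (fun (f : Defs.fsym L) (args : 'I_(farity f) -> C2) => h (@fint L C1 M f (fun i => k (args i))))
    (fun (r : Defs.rsym L) (args : 'I_(rarity r) -> C2) => @rint L C1 M r (fun i => k (args i))).

Variable M : structure L C1.

Lemma teval_iso e t : teval (trans M) (fun n => h (e n)) t = h (teval M e t).
Proof.
elim: t => [n|f ts IH] //=; congr h; congr fint; apply: functional_extensionality => i.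
by rewrite IH hk.
Qed.

Lemma asat_iso e a : asat (trans M) (fun n => h (e n)) a <-> asat M e a.
Proof.
case: a => [t1 t2|r ts] /=; rewrite /asat.
  by rewrite !teval_iso; split => [/(can_inj hk)|->].
have -> // : (fun i => k (teval (trans M) (fun n => h (e n)) (ts i))) = (fun i => teval M e (ts i)).
by apply: functional_extensionality => i; rewrite teval_iso hk.
Qed.

Lemma sat_iso psi : forall e, sat (trans M) (fun n => h (e n)) psi <-> sat M e psi.
Proof.
have U : forall e n x, upd (fun m => h (e m)) n (h x) = (fun m => h (upd e n x m)).
  by move=> e n x; apply: functional_extensionality => m; rewrite /upd; case: eqP.
elim: psi => [a|psi IH|fs IH|fs IH|n psi IH|n psi IH] e /=.
- exact: asat_iso.
- by rewrite IH.
- by split => H i; apply/IH.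
- by split => -[i H]; exists i; apply/IH.
- split => -[x H].
    by exists (k x); apply/IH; rewrite -U kh.
  by exists (h x); rewrite U; apply/IH.
- split => H x.
    by apply/IH; rewrite -U.
  by rewrite -(kh x) U; apply/IH.
Qed.

Lemma models_iso phi : models M phi -> models (trans M) phi.
Proof.
move=> H e; have -> : e = (fun n => h (k (e n))) by apply: functional_extensionality => n; rewrite kh.
by apply/sat_iso.
Qed.

Lemma nth_map_h (c : C1) s i : nth (h c) (map h s) i = h (nth c s i).
Proof. by elim: s i => [|x s IH] [|i] //=. Qed.

Lemma diag0_iso c s : diag0 (@PStr L C2 (h c) (trans M) (map h s)) = diag0 (@PStr L C1 c M s).
Proof.
apply: predext => l; rewrite /diag0 /= size_map.
have -> : (fun i => nth (h c) (map h s) i) = (fun i => h (nth c s i)).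
  by apply: functional_extensionality => i; rewrite nth_map_h.
by case: l => a /=; rewrite asat_iso.
Qed.

Variable c : C1.
Lemma TPISO d : forall s, TP d (@PStr L C1 c M s) (@PStr L C2 (h c) (trans M) (map h s)).
Proof.
elim/(well_founded_induction wf): d => d IH s; apply/tp_unfold; split.
  by move=> l; rewrite diag0_iso.
move=> e he; split; first exact: IH.
move=> _; split.
  by move=> b; exists (map h b); rewrite /ext /= -map_cat; apply: IH.
move=> b; exists (map k b); rewrite /ext /=.
have -> : map h s ++ b = map h (s ++ map k b) by rewrite map_cat mapK.
exact: IH.
Qed.

Lemma typ_iso a s : typ wf a (@PStr L C1 c M s) = typ wf a (@PStr L C2 (h c) (trans M) (map h s)).
Proof.
apply: predext => i; rewrite /typ diag0_iso.
have E1 : forall d b, TP d (@ext _ (@PStr L C1 c M s) b) = TP d (@ext _ (@PStr L C2 (h c) (trans M) (map h s)) (map h b)).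
  by move=> d b; apply/tp_eqP; rewrite /ext /= -map_cat; apply: TPISO.
have E2 : forall d, TP d (@PStr L C1 c M s) = TP d (@PStr L C2 (h c) (trans M) (map h s)).
  by move=> d; apply/tp_eqP; apply: TPISO.
split => -[H|[[d [sd [b ->]]]|[lm [d [ld ->]]]]]; [by left| | | by left | |].
- by right; left; exists d; split => //; exists (map h b); rewrite E1.
- by right; right; split => //; exists d; rewrite E2.
- right; left; exists d; split => //; exists (map k b); rewrite E1 mapK //.
- by right; right; split => //; exists d; rewrite E2.
Qed.
End Iso.


Section Bij.
Variables (T : countType) (t0 : T).

Lemma fin_iso N : (forall t : T, pickle t < N) ->
  exists (n : nat) (h : T -> 'I_n.+1) (k : 'I_n.+1 -> T), cancel h k /\ cancel k h /\ h t0 = ord0.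
Proof.
move=> hN.
pose rest := filter (predC1 t0) (undup (pmap unpickle (iota 0 N))).
pose es := t0 :: rest.
have mem : forall t, t \in es.
  move=> t; rewrite inE; case: eqP => //= /eqP ht.
  rewrite /rest mem_filter /= ht mem_undup mem_pmap; apply/mapP; exists (pickle t); last by rewrite pickleK.
  by rewrite mem_iota add0n hN.
have un : uniq es by rewrite /= /rest mem_filter /= eqxx /= filter_uniq // undup_uniq.
exists (size rest), (fun t => inord (index t es)), (fun i => nth t0 es i); split; last split.
- move=> t /=; have hi : index t es < (size rest).+1 by rewrite -[(size rest).+1]/(size es) index_mem.
  by rewrite inordK // nth_index.
- move=> i; rewrite (@index_uniq _ t0 i es) ?inord_val //.
- by apply: val_inj; rewrite /= eqxx inordK.
Qed.

Hypothesis inf : forall N, exists t : T, N <= pickle t.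
Definition Pn (prev : seq T) (n : nat) : bool := if pickle_inv n is Some t then t \notin prev else false.
Lemma exPn prev : exists n, Pn prev n.
Proof.
have [t ht] := inf (\max_(x <- prev) pickle x).+1.
exists (pickle t); rewrite /Pn pickleK_inv; apply/negP => hin.
have := @leq_bigmax_seq T prev xpredT (fun x => pickle x) t hin (erefl true).
by rewrite leqNgt ht.
Qed.
Definition next prev : T := if pickle_inv (ex_minn (exPn prev)) is Some t then t else t0.
Lemma next_spec prev : next prev \notin prev /\ forall t, t \notin prev -> pickle (next prev) <= pickle t.
Proof.
rewrite /next; case: ex_minnP => m; rewrite /Pn; case E: (pickle_inv m) => [x|] // hx hmin.
split => // t ht; have := @pickle_invK T m; rewrite E /= => ->; apply: hmin.
by rewrite pickleK_inv.
Qed.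
Fixpoint gl n : seq T := if n is n'.+1 then rcons (gl n') (next (gl n')) else [:: t0].
Definition g n := last t0 (gl n).
Lemma gS n : g n.+1 = next (gl n). Proof. by rewrite /g /= last_rcons. Qed.
Lemma gl_mem m x : x \in gl m <-> exists2 i, i <= m & x = g i.
Proof.
elim: m x => [|m IH] x /=.
  by rewrite inE; split => [/eqP ->|[[|i] // _ ->]]; [exists 0|].
rewrite mem_rcons inE -gS; split.
  case/orP => [/eqP ->|/IH [i hi ->]]; first by exists m.+1.
  by exists i => //; apply: leqW.
move=> [i]; rewrite leq_eqVlt => /orP [/eqP ->|hi] ->; first by rewrite eqxx.
by apply/orP; right; apply/IH; exists i.
Qed.
Lemma g_inj : injective g.
Proof.
suff H : forall i j, i < j -> g i <> g j.
  move=> i j e; case: (ltngtP i j) => [hij|hij|//].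
    by case: (H _ _ hij e).
  by case: (H _ _ hij (esym e)).
move=> i [//|j] hij e; have [hn _] := next_spec (gl j); move: hn; rewrite -gS -e.
by move/negP; apply; apply/gl_mem; exists i.
Qed.
Lemma g_surj t : exists n, g n = t.
Proof.
apply: NNPP => nt.
have hnot : forall n, t \notin gl n.
  by move=> n; apply/negP => /gl_mem [i _ e]; apply: nt; exists i.
have hlt : forall n, pickle (g n.+1) < pickle t.
  move=> n; rewrite gS ltn_neqAle; have [_ hm] := next_spec (gl n).
  rewrite hm // andbT; apply/negP => /eqP /(pcan_inj pickleK) e.
  by apply: nt; exists n.+1; rewrite gS.
pose f (i : 'I_(pickle t).+1) : 'I_(pickle t) := Ordinal (hlt i).
have : injective f.
  move=> i j /(congr1 val) /= /(pcan_inj pickleK) /g_inj [] e; exact: val_inj.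
by move/leq_card; rewrite !card_ord ltnn.
Qed.
Lemma inf_iso : exists (h : T -> nat) (k : nat -> T), cancel h k /\ cancel k h /\ h t0 = 0.
Proof.
pose h t := proj1_sig (constructive_indefinite_description _ (g_surj t)).
have hk : cancel h g by move=> t; rewrite /h; case: constructive_indefinite_description.
exists h, g; split => //; split; first by move=> n; apply: g_inj; rewrite hk.
by apply: g_inj; rewrite hk.
Qed.
End Bij.

Lemma iso_exists (T : countType) (t0 : T) :
 (exists (n : nat) (h : T -> 'I_n.+1) (k : 'I_n.+1 -> T), cancel h k /\ cancel k h /\ h t0 = ord0) \/
 (exists (h : T -> nat) (k : nat -> T), cancel h k /\ cancel k h /\ h t0 = 0).
Proof.
case: (classic (exists N, forall t : T, pickle t < N)) => [[N hN]|hn].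
  by left; exact: fin_iso hN.
right; apply: inf_iso => N; apply: NNPP => H; apply: hn; exists N => t.
by rewrite ltnNge; apply/negP => h; apply: H; exists t.
Qed.


Definition agree N (y y' : nat -> nat) := forall i, i < N -> y' i = y i.
Definition LDf X (F : (nat -> nat) -> X) := forall y, exists N, forall y', agree N y y' -> F y' = F y.

Lemma agreeW N M y y' : agree N y y' -> M <= N -> agree M y y'.
Proof. by move=> h hM i hi; apply: h; apply: leq_trans hM. Qed.

Lemma LDf_const X (x : X) : LDf (fun _ => x).
Proof. by move=> y; exists 0. Qed.

Lemma LDf_app2 X Y Z (f : X -> Y -> Z) A B : LDf A -> LDf B -> LDf (fun y => f (A y) (B y)).
Proof.
move=> hA hB y; have [N1 h1] := hA y; have [N2 h2] := hB y.
exists (maxn N1 N2) => y' ag.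
have a1 : agree N1 y y' by apply: (agreeW ag); rewrite leq_maxl.
have a2 : agree N2 y y' by apply: (agreeW ag); rewrite leq_maxr.
by rewrite h1 // h2.
Qed.

Lemma LDf_app X Y (f : X -> Y) A : LDf A -> LDf (fun y => f (A y)).
Proof. by move=> hA y; have [N h] := hA y; exists N => y' ag; rewrite h. Qed.

Lemma LDf_y k : LDf (fun y => y k).
Proof. by move=> y; exists k.+1 => y' ag; apply: ag. Qed.

Section Baire.
Variables (V : Type) (DX : V -> Prop) (BX : (V -> Prop) -> Prop) (bT : V -> Prop).
Hypotheses (hbT : BX bT) (hbT' : forall v, DX v -> bT v).
Local Notation D2 := (fun z : V * (nat -> nat) => DX z.1).
Local Notation G2 := (open_in D2 (baire_prod_basis BX)).
Definition pref (s : seq nat) := fun y : nat -> nat => forall i, i < size s -> y i = nth 0 s i.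

Lemma pref_mB s : mB D2 G2 (fun w => pref s w.2).
Proof.
have : mB D2 G2 (fun z => bT z.1 /\ pref s z.2).
  by apply: basis_mB; exists bT, (pref s); split => //; split => //; exists s.
by apply: mB_ext => w dw; split => [[]|] // h; split => //; apply: hbT'.
Qed.

Lemma BX_mB b : BX b -> mB D2 G2 (fun w => b w.1).
Proof.
move=> hb; have : mB D2 G2 (fun z => b z.1 /\ pref [::] z.2).
  by apply: basis_mB; exists b, (pref [::]); split => //; split => //; exists [::].
by apply: mB_ext => w dw; split => [[]|] // h; split => // i.
Qed.

Lemma LD_mB (Q : (nat -> nat) -> Prop) : LDf Q -> mB D2 G2 (fun w => Q w.2).
Proof.
move=> hQ.
have : mB D2 G2 (fun w => exists s : seq nat, (forall y', pref s y' -> Q y') /\ pref s w.2).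
  by apply: mB_ex => s; apply: mB_and; [exact: mB_const | exact: pref_mB].
apply: mB_ext => w _; split; first by move=> [s [h1 h2]]; apply: h1.
move=> hq; have [N hN] := hQ w.2; exists (mkseq w.2 N); split; last first.
  by move=> i; rewrite size_mkseq => hi; rewrite nth_mkseq.
move=> y' hy'; rewrite hN // => i hi; by rewrite hy' ?size_mkseq // nth_mkseq.
Qed.
End Baire.

Section Dec.
Variables (L : lang) (C : countType) (c0 : C).
Definition key_f (f : Defs.fsym L) (args : 'I_(farity f) -> C) : nat :=
  (pickle ((true, (pickle f, [seq args i | i <- enum 'I_(farity f)])) : bool * (nat * seq C))).+2.
Definition key_r (r : Defs.rsym L) (args : 'I_(rarity r) -> C) : nat :=
  (pickle ((false, (pickle r, [seq args i | i <- enum 'I_(rarity r)])) : bool * (nat * seq C))).+2.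
Definition fdec (y : nat -> nat) : structure L C :=
  @Struc L C (fun (f : Defs.fsym L) (args : 'I_(farity f) -> C) => odflt c0 (@unpickle C (y (key_f args))))
    (fun (r : Defs.rsym L) (args : 'I_(rarity r) -> C) => y (key_r args) = 0).
Definition sdec (y : nat -> nat) : seq C := odflt [::] (@unpickle (seq C) (y 0)).

Lemma LD_teval (E : (nat -> nat) -> nat -> C) : (forall k, LDf (fun y => E y k)) ->
  forall t, LDf (fun y => teval (fdec y) (E y) t).
Proof.
move=> hE; elim => [n|f ts IH] /=; first exact: hE.
move=> y.
pose Nf i := proj1_sig (constructive_indefinite_description _ (IH i y)).
have hNf : forall i y', agree (Nf i) y y' -> teval (fdec y') (E y') (ts i) = teval (fdec y) (E y) (ts i).
  by move=> i; rewrite /Nf; case: constructive_indefinite_description.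
exists (maxn (key_f (fun i => teval (fdec y) (E y) (ts i))).+1 (\max_i Nf i)) => y' ag.
have ea : (fun i => teval (fdec y') (E y') (ts i)) = (fun i => teval (fdec y) (E y) (ts i)).
  apply: functional_extensionality => i; apply: hNf; apply: (agreeW ag).
  by rewrite leq_max (@leq_bigmax _ Nf i) orbT.
rewrite /= ea ag //; exact: leq_maxl.
Qed.

Lemma LD_asat (E : (nat -> nat) -> nat -> C) : (forall k, LDf (fun y => E y k)) ->
  forall a, LDf (fun y => asat (fdec y) (E y) a).
Proof.
move=> hE [t1 t2|r ts] /=; rewrite /asat.
  by apply: LDf_app2; apply: LD_teval.
move=> y.
have hts : forall i, LDf (fun y => teval (fdec y) (E y) (ts i)) by move=> i; apply: LD_teval.
pose Nf i := proj1_sig (constructive_indefinite_description _ (hts i y)).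
have hNf : forall i y', agree (Nf i) y y' -> teval (fdec y') (E y') (ts i) = teval (fdec y) (E y) (ts i).
  by move=> i; rewrite /Nf; case: constructive_indefinite_description.
exists (maxn (key_r (fun i => teval (fdec y) (E y) (ts i))).+1 (\max_i Nf i)) => y' ag.
have ea : (fun i => teval (fdec y') (E y') (ts i)) = (fun i => teval (fdec y) (E y) (ts i)).
  apply: functional_extensionality => i; apply: hNf; apply: (agreeW ag).
  by rewrite leq_max (@leq_bigmax _ Nf i) orbT.
rewrite /= ea ag //; exact: leq_maxl.
Qed.

Lemma LD_sdec : LDf sdec.
Proof. exact: (LDf_app (fun v => odflt [::] (@unpickle (seq C) v)) (LDf_y 0)). Qed.

Lemma LD_diag0 b l : LDf (fun y => diag0 (@PStr L C c0 (fdec y) (sdec y ++ b)) l).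
Proof.
have hE : forall k, LDf (fun y => nth c0 (sdec y ++ b) k).
  by move=> k; apply: (LDf_app (fun s => nth c0 (s ++ b) k)); exact: LD_sdec.
rewrite /diag0 /=; apply: LDf_app2.
  by apply: (LDf_app (fun s => lvars_lt (size (s ++ b)) l)); exact: LD_sdec.
case: l => a /=.
  exact: (LD_asat hE).
by apply: (LDf_app (fun P => ~ P)); exact: (LD_asat hE).
Qed.
End Dec.


Section SAT.
Variables (V : Type) (DX : V -> Prop) (BX : (V -> Prop) -> Prop) (bT : V -> Prop).
Hypotheses (hbT : BX bT) (hbT' : forall v, DX v -> bT v).
Local Notation D2 := (fun z : V * (nat -> nat) => DX z.1).
Local Notation G2 := (open_in D2 (baire_prod_basis BX)).
Variables (L : lang) (C : countType) (c0 : C).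

Lemma SAT (psi : form L) : forall e : nat -> C, mB D2 G2 (fun w => sat (fdec L c0 w.2) e psi).
Proof.
elim: psi => [a|psi IH|fs IH|fs IH|n psi IH|n psi IH] e /=.
- apply: (LD_mB hbT hbT' (Q := fun y => asat (fdec L c0 y) e a)).
  exact: (@LD_asat L C c0 (fun _ => e) (fun k => LDf_const (e k)) a).
- exact: mB_not.
- by apply: mB_alln => i; apply: IH.
- by apply: mB_exn => i; apply: IH.
- by apply: mB_ex => x; apply: IH.
- by apply: mB_all => x; apply: IH.
Qed.
End SAT.

Section Code.
Variables (L : lang) (C : countType) (c0 : C).

Lemma nth_enum_map n (args : 'I_n -> C) : (fun i : 'I_n => nth c0 [seq args j | j <- enum 'I_n] i) = args.
Proof.
apply: functional_extensionality => i.
by rewrite (nth_map i) ?size_enum_ord ?ltn_ord // nth_ord_enum.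
Qed.

Lemma code (M : structure L C) (s : seq C) (sel : nat) :
  exists y, fdec L c0 y = M /\ sdec C y = s /\ y 1 = sel.
Proof.
case: M => fi ri.
pose y (n : nat) : nat :=
  match n with
  | 0 => pickle s
  | 1 => sel
  | S (S n') =>
    match @unpickle (bool * (nat * seq C))%type n' with
    | Some (true, (pf, args)) =>
        match @unpickle (Defs.fsym L) pf with
        | Some f => pickle (fi f (fun i => nth c0 args i))
        | None => 0 end
    | Some (false, (pr, args)) =>
        match @unpickle (Defs.rsym L) pr with
        | Some r => if excluded_middle_informative (ri r (fun i => nth c0 args i)) then 0 else 1
        | None => 0 end
    | None => 0
    end
  end.
exists y; split; last by rewrite /sdec /y pickleK.
rewrite /fdec; congr Struc.
  apply: functional_extensionality_dep => f; apply: functional_extensionality => args.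
  by rewrite /key_f /y (@pickleK (bool * (nat * seq C))%type (true, (pickle f, [seq args i | i <- enum 'I_(farity f)]))) (@pickleK (Defs.fsym L) f) nth_enum_map (@pickleK C) /=.
apply: functional_extensionality_dep => r; apply: functional_extensionality => args.
rewrite /key_r /y (@pickleK (bool * (nat * seq C))%type (false, (pickle r, [seq args i | i <- enum 'I_(rarity r)]))) (@pickleK (Defs.rsym L) r) nth_enum_map.
apply: propositional_extensionality; case: excluded_middle_informative => //.
Qed.
End Code.


Section P2.
Variables (L : lang) (lt : nat -> nat -> Prop) (wf : well_founded lt).
Variables (phi : form L) (hphi : sentence phi) (a : nat).
Hypothesis hcount : forall g, lt g a -> countable_set (Psi wf phi g).
Local Notation DX := (Xdom wf phi a).
Local Notation BX := (Xbasis wf phi a).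
Definition bT : (Idx L -> Prop) -> Prop := fun S => (forall i, List.In i [::] -> S i) /\ (forall i, List.In i [::] -> ~ S i).
Lemma hbT : BX bT. Proof. by exists [::], [::]. Qed.
Lemma hbT' S : DX S -> bT S. Proof. by []. Qed.
Local Notation D2 := (fun z : (Idx L -> Prop) * (nat -> nat) => DX z.1).
Local Notation G2 := (open_in D2 (baire_prod_basis BX)).

Definition oiff (o : option (Idx L)) (S T : Idx L -> Prop) := if o is Some i then (S i <-> T i) else True.

Definition PC (C : countType) (c0 : C) (nb : bool) (w : (Idx L -> Prop) * (nat -> nat)) :=
  models (fdec L c0 w.2) phi /\ (nb -> sdec C w.2 = [::]) /\
  forall j, oiff (en hcount j) w.1 (typ wf a (@PStr L C c0 (fdec L c0 w.2) (sdec C w.2))).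

Lemma PC_mB C c0 nb : mB D2 G2 (@PC C c0 nb).
Proof.
apply: mB_and.
  have := SAT hbT hbT' c0 phi (fun _ => c0).
  by apply: mB_ext => w _; rewrite (models_sent _ (fun _ => c0) hphi).
apply: mB_and.
  apply: mB_impl => _.
  apply: (LD_mB hbT hbT' (Q := fun y => sdec C y = [::])).
  exact: (LDf_app (fun s => s = [::]) (@LD_sdec C)).
apply: mB_all => j; rewrite /oiff; case E: (en hcount j) => [i|]; last exact: mB_True.
have hi := en_sound E.
have h1 : mB D2 G2 (fun w => w.1 i).
  pose bi := fun S : Idx L -> Prop => (forall x, List.In x [:: i] -> S x) /\ (forall x, List.In x [::] -> ~ S x).
  have : mB D2 G2 (fun w => bi w.1).
    apply: (@BX_mB _ (Xdom wf phi a) (Xbasis wf phi a) bi).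
    by exists [:: i], [::]; split => //= x [<-|].
  by apply: mB_ext => w _ /=; split => [[h _]|h]; [apply: h; left | split => // x [<-|]].
have HD : forall b l, mB D2 G2 (fun w => diag0 (@Pw L _ C c0 (fun w => fdec L c0 w.2) (fun w => sdec C w.2) w b) l).
  by move=> b l; exact: (LD_mB hbT hbT' (LD_diag0 c0 b l)).
have h2 := MEM wf (@litenumS L) HD a i.
exact: (mB_iff h1 h2).
Qed.

Definition Pall (nb : bool) (w : (Idx L -> Prop) * (nat -> nat)) :=
  (w.2 1 = 0 /\ @PC nat 0 nb w) \/ (exists n, w.2 1 = n.+1 /\ @PC 'I_n.+1 ord0 nb w).

Lemma Pall_mB nb : mB D2 G2 (Pall nb).
Proof.
have s0 : mB D2 G2 (fun w => w.2 1 = 0).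
  exact: (LD_mB hbT hbT' (Q := fun y => y 1 = 0) (LDf_app (fun v => v = 0) (LDf_y 1))).
have sn : forall n, mB D2 G2 (fun w => w.2 1 = n.+1).
  by move=> n; exact: (LD_mB hbT hbT' (Q := fun y => y 1 = n.+1) (LDf_app (fun v => v = n.+1) (LDf_y 1))).
have A1 := mB_and s0 (@PC_mB nat 0 nb).
have A2 : mB D2 G2 (fun w => exists n, w.2 1 = n.+1 /\ @PC 'I_n.+1 ord0 nb w).
  by apply: mB_exn => n; exact: (mB_and (sn n) (@PC_mB 'I_n.+1 ord0 nb)).
exact: (mB_or A1 A2).
Qed.

Lemma PC_typ (C : countType) (c0 : C) nb w : D2 w -> PC c0 nb w ->
  exists p, pmodel phi p /\ (nb -> tup p = [::]) /\ w.1 = typ wf a p.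
Proof.
move=> dw [hm [hn ho]]; exists (@PStr L C c0 (fdec L c0 w.2) (sdec C w.2)); split => //; split => //.
apply: predext => i; case: (classic (Xidx wf phi a i)) => hi.
  have [j ej] := en_surj hcount hi; by have := ho j; rewrite ej.
split => h; case: hi; first exact: (dw i h).
exact: (typ_Xdom (a := a) (p := @PStr L C c0 (fdec L c0 w.2) (sdec C w.2)) hm h).
Qed.

Lemma typ_PC (C : countType) (c0 : C) (nb : bool) (p : pstr L) (h : car p -> C) (k : C -> car p) (hk : cancel h k) (kh : cancel k h) (sel : nat) :
  h (pt p) = c0 -> pmodel phi p -> (nb -> tup p = [::]) ->
  exists y, y 1 = sel /\ PC c0 nb (typ wf a p, y).
Proof.
case: p h k hk kh => T t0 M s /= h k hk kh h0 hm hn.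
have [y [e1 [e2 e3]]] := code c0 (trans h k M) (map h s) sel.
exists y; split => //; rewrite /PC /= e1 e2; split; first exact: models_iso.
split; first by move=> /hn ->.
move=> j; case: (en hcount j) => // i /=; rewrite -h0 -(typ_iso wf hk kh) //.
Qed.

Lemma main2 (nb : bool) : sigma11 DX BX (fun S => exists p, pmodel phi p /\ (nb -> tup p = [::]) /\ S = typ wf a p).
Proof.
exists (fun w => DX w.1 /\ Pall nb w); split; first exact: Pall_mB.
move=> S; split.
  move=> [p [hm [hn ->]]]; have dS := typ_Xdom (wf := wf) (a := a) hm.
  case: (iso_exists (pt p)) => [[n [h [k [hk [kh h0]]]]]|[h [k [hk [kh h0]]]]].
    have [y [e1 hp]] := typ_PC (nb := nb) hk kh n.+1 h0 hm hn.
    by exists y; split => //; right; exists n.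
  have [y [e1 hp]] := typ_PC (nb := nb) hk kh 0 h0 hm hn.
  by exists y; split => //; left.
move=> [y [dS [[_ hp]|[n [_ hp]]]]].
  by have := PC_typ dS hp.
by have := PC_typ dS hp.
Qed.
End P2.

Theorem lemma13 (L : lang) (phi : form L) (hphi : sentence phi)
  (lt : nat -> nat -> Prop) (wf : well_founded lt)
  (lt_trans : forall x y z, lt x y -> lt y z -> lt x z)
  (lt_total : forall x y, lt x y \/ x = y \/ lt y x)
  (a : nat)
  (hcount : forall g, lt g a -> countable_set (Psi wf phi g)) :
  ((forall z, ModSeq phi z -> Xdom wf phi a (tpmap wf a z)) /\
   (forall B, borel (Xdom wf phi a) (Xbasis wf phi a) B ->
      borel (ModSeq phi) (@mod_seq_basis L)
            (fun z => ModSeq phi z /\ B (tpmap wf a z)))) /\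
  sigma11 (Xdom wf phi a) (Xbasis wf phi a) (PsiX wf phi a) /\
  sigma11 (Xdom wf phi a) (Xbasis wf phi a) (PhiX wf phi a).
Proof.
split; first exact: part1.
split.
  have [P [hP e]] := main2 hphi hcount false.
  exists P; split => // S; rewrite -e; split.
    by move=> [p [hm ->]]; exists p.
  by move=> [p [hm [_ ->]]]; exists p.
have [P [hP e]] := main2 hphi hcount true.
exists P; split => // S; rewrite -e; split.
  by move=> [p [hm [ht ->]]]; exists p.
by move=> [p [hm [ht ->]]]; exists p; split => //; split => //; apply: ht.
Qed.
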